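(* Let $f(t)=\sum_{n=1}^{\infty}t^{n}/n^{n}=t\int_0^1x^{-tx}\,dx$. Then $f(t)\to-1$ as $t\to-\infty$ along the real axis.
   Context: $x^{-tx}=\exp(-tx\ln x)$ for $x\in(0,1]$. *)

(* Defs.v *)
From Stdlib Require Import Reals.
From Coquelicot Require Import Coquelicot.
Open Scope R_scope.

Definition sophf (t : R) : R :=
  Series (fun n : nat => t ^ (S n) / (INR (S n)) ^ (S n)).

(* Main.v *)
Require Import Defs.
From Stdlib Require Import Reals Lra Lia.
From Coquelicot Require Import Coquelicot.
Open Scope R_scope.
From Coquelicot Require Import Coquelicot.
Open Scope R_scope.

Definition p (x : R) : R := x * ln x.

Lemma ln_nonpos x : x <= 0 -> ln x = 0.
Proof. intros H. unfold ln. destruct (Rlt_dec 0 x) as [h|h]; [exfalso; lra | reflexivity]. Qed.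

Lemma ln_le_sub1 y : 0 < y -> ln y <= y - 1.
Proof.
  intros Hy. rewrite <- (ln_exp (y - 1)). apply ln_le; [exact Hy|].
  pose proof (exp_ineq1_le (y - 1)). lra.
Qed.

Lemma exp_sq y : 0 <= y -> y ^ 2 / 2 <= exp y.
Proof.
  intros Hy. pose proof (exp_ge_taylor y 2 Hy) as H.
  simpl in H. unfold Factorial.fact in H. simpl in H. 
  assert (y ^ 2 / 2 <= 1 / 1 + y * 1 / 1 + y * (y * 1) / (1 + 1)).
  { simpl. assert (0 <= y / 1) by (unfold Rdiv; rewrite Rinv_1; lra). field_simplify. nra. }
  lra.
Qed.

Lemma ln_nonpos01 x : x <= 1 -> ln x <= 0.
Proof.
  intros H. destruct (Rle_lt_dec x 0). rewrite ln_nonpos; lra.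
  rewrite <- ln_1. apply ln_le; lra.
Qed.

Lemma p_le0 x : 0 <= x <= 1 -> p x <= 0.
Proof. intros H. unfold p. pose proof (ln_nonpos01 x). nra. Qed.

Lemma p_ge x : 0 <= x <= 1 -> x - 1 <= p x.
Proof.
  intros H. unfold p. destruct (Req_dec x 0). subst. lra.
  assert (0 < x) by lra.
  pose proof (ln_le_sub1 (/ x) (Rinv_0_lt_compat _ H1)).
  rewrite ln_Rinv in H2 by lra.
  assert (x * (- ln x) <= x * (/ x - 1)) by (apply Rmult_le_compat_l; lra).
  rewrite Rmult_minus_distr_l, Rinv_r in H3 by lra. lra.
Qed.

Lemma p_abs x : 0 <= x <= 1 -> Rabs (p x) <= 1.
Proof. intros H. pose proof (p_le0 x H). pose proof (p_ge x H). apply Rabs_le. lra. Qed.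

Lemma p_le_sq x : 0 <= x <= 1 -> p x <= x * (x - 1).
Proof.
  intros H. unfold p. destruct (Req_dec x 0). subst. lra.
  pose proof (ln_le_sub1 x). apply Rmult_le_compat_l; lra.
Qed.

Lemma p_le_eta x eta : 0 < eta -> 0 <= x <= eta -> p x <= x * ln eta.
Proof.
  intros He H. unfold p. destruct (Req_dec x 0). subst. lra.
  apply Rmult_le_compat_l. lra. apply ln_le; lra.
Qed.

Lemma p_small x : 0 < x < 1 -> Rabs (p x) <= 2 / (- ln x).
Proof.
  intros H. assert (Hl : ln x < 0). { rewrite <- ln_1. apply ln_increasing; lra. }
  set (u := - ln x). assert (Hu : 0 < u) by (unfold u; lra).
  assert (Hx : x = / exp u). { unfold u. rewrite exp_Ropp, exp_ln by lra. rewrite Rinv_inv. reflexivity. }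
  unfold p. rewrite Rabs_left1 by (pose proof (ln_nonpos01 x); nra).
  replace (- (x * ln x)) with (u / exp u) by (unfold Rdiv; rewrite <- Hx; unfold u; ring).
  pose proof (exp_sq u (Rlt_le _ _ Hu)). pose proof (exp_pos u).
  apply (Rmult_le_reg_r (exp u * u)). nra.
  field_simplify; try nra.
Qed.

Lemma p_cont0 : continuous p 0.
Proof.
  apply continuity_pt_filterlim.
  intros eps Heps.
  exists (Rmin (exp (- (2 / eps))) 1). split.
  { apply Rmin_pos; [apply exp_pos | lra]. }
  intros x [_ Hx]. simpl in *. unfold R_dist in *.
  replace (p 0) with 0 by (unfold p; ring). rewrite !Rminus_0_r in *.
  destruct (Rle_lt_dec x 0).
  { unfold p. rewrite ln_nonpos by lra. rewrite Rmult_0_r, Rabs_R0. exact Heps. }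
  assert (Hx1 : x < 1). { rewrite Rabs_right in Hx by lra. pose proof (Rmin_r (exp (- (2 / eps))) 1). lra. }
  assert (Hx2 : x < exp (- (2 / eps))). { rewrite Rabs_right in Hx by lra. pose proof (Rmin_l (exp (- (2 / eps))) 1). lra. }
  assert (Hl : ln x < - (2 / eps)). { rewrite <- (ln_exp (- (2/eps))). apply ln_increasing; lra. }
  eapply Rle_lt_trans. apply p_small. lra.
  assert (0 < 2 / eps) by (apply Rdiv_lt_0_compat; lra).
  apply (Rmult_lt_reg_r (- ln x)). lra.
  unfold Rdiv. rewrite Rmult_assoc, Rinv_l by lra.
  apply (Rmult_lt_reg_l (/ eps)). apply Rinv_0_lt_compat; lra.
  replace (/ eps * (eps * - ln x)) with (- ln x) by (field; lra). lra.
Qed.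

Lemma p_cont x : 0 <= x -> continuous p x.
Proof.
  intros H. destruct (Req_dec x 0). subst; apply p_cont0.
  refine (ex_derive_continuous p x _). unfold p. auto_derive. lra.
Qed.

Lemma pow_le1 x n : 0 <= x <= 1 -> x ^ n <= 1.
Proof. intros H. induction n; simpl. lra. assert (0 <= x ^ n) by (apply pow_le; lra). nra. Qed.
Definition mom (a j : nat) : R := RInt (fun x => x ^ a * p x ^ j) 0 1.

Lemma cont_mom a j x : 0 <= x -> continuous (fun y => y ^ a * p y ^ j) x.
Proof.
  intros H. apply (continuous_mult (fun y => y ^ a) (fun y => p y ^ j)).
  - refine (ex_derive_continuous (fun y => y ^ a) x _). auto_derive. auto.
  - apply (continuous_comp p (fun z => z ^ j)). apply p_cont; auto.
    refine (ex_derive_continuous (fun z => z ^ j) _ _). auto_derive; auto.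
Qed.

Lemma ex_RInt_mom a j u v : 0 <= u <= v -> ex_RInt (fun y => y ^ a * p y ^ j) u v.
Proof.
  intros H. apply (ex_RInt_continuous (V := R_CompleteNormedModule)). intros z Hz. apply cont_mom.
  rewrite Rmin_left in Hz by lra. lra.
Qed.

Lemma mom_bound a j x : 0 <= x <= 1 -> Rabs (x ^ a * p x ^ j) <= 1.
Proof.
  intros H. rewrite Rabs_mult, <- !RPow_abs.
  assert (0 <= Rabs x ^ a <= 1). { split. apply pow_le, Rabs_pos. apply pow_le1. split. apply Rabs_pos. rewrite Rabs_right; lra. }
  assert (0 <= Rabs (p x) ^ j <= 1). { split. apply pow_le, Rabs_pos. apply pow_le1. split. apply Rabs_pos. apply p_abs; auto. }
  nra.
Qed.

Lemma small_zero X K : 0 < K -> (forall e, 0 < e < 1 -> Rabs X <= e * K) -> X = 0.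
Proof.
  intros HK H. destruct (Req_dec X 0) as [|Hn]; auto. exfalso.
  assert (HX : 0 < Rabs X) by (apply Rabs_pos_lt; auto).
  set (e := Rmin (/2) (Rabs X / (2 * K))).
  assert (He : 0 < e). { apply Rmin_pos. lra. apply Rdiv_lt_0_compat; lra. }
  assert (He1 : e <= / 2) by apply Rmin_l.
  assert (He2 : e <= Rabs X / (2 * K)) by apply Rmin_r.
  specialize (H e ltac:(lra)).
  assert (e * K <= Rabs X / 2).
  { apply (Rmult_le_compat_r K) in He2; [|lra]. replace (Rabs X / (2 * K) * K) with (Rabs X / 2) in He2 by (field; lra). lra. }
  lra.
Qed.

Lemma deriv_F a j x : 0 < x -> is_derive (fun y => y ^ (S a) * (y * ln y) ^ (S j)) x
   ((INR a + 1 + INR (S j)) * (x ^ a * (x * ln x) ^ (S j)) + INR (S j) * (x ^ (S a) * (x * ln x) ^ j)).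
Proof.
intros. auto_derive. lra. change (match a with 0%nat => 1 | S _ => INR a + 1 end) with (INR (S a)). change (match j with 0%nat => 1 | S _ => INR j + 1 end) with (INR (S j)). rewrite !S_INR. rewrite <- !tech_pow_Rmult. replace (x * (1 * / x)) with 1 by (field; lra). ring.
Qed.

Lemma mom_rec a j : (INR a + 1 + INR (S j)) * mom a (S j) + INR (S j) * mom (S a) j = 0.
Proof.
  set (c1 := INR a + 1 + INR (S j)). set (c2 := INR (S j)).
  set (g := fun x => c1 * (x ^ a * p x ^ S j) + c2 * (x ^ S a * p x ^ j)).
  assert (Hc1 : 0 <= c1). { unfold c1. pose proof (pos_INR a). pose proof (pos_INR (S j)). lra. }
  assert (Hc2 : 0 <= c2). { apply pos_INR. }
  assert (Hg : forall u v, 0 <= u <= v -> is_RInt g u v (c1 * RInt (fun x => x ^ a * p x ^ S j) u v + c2 * RInt (fun x => x ^ S a * p x ^ j) u v)).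
  { intros u v Huv. apply (is_RInt_plus (V := R_NormedModule)); apply (is_RInt_scal (V := R_NormedModule)); apply (RInt_correct (V := R_CompleteNormedModule)); apply ex_RInt_mom; auto. }
  assert (Hgb : forall x, 0 <= x <= 1 -> Rabs (g x) <= c1 + c2).
  { intros x Hx. unfold g. eapply Rle_trans. apply Rabs_triang. rewrite (Rabs_mult c1), (Rabs_mult c2), (Rabs_right c1), (Rabs_right c2) by lra.
    pose proof (mom_bound a (S j) x Hx). pose proof (mom_bound (S a) j x Hx). nra. }
  assert (HI : RInt g 0 1 = c1 * mom a (S j) + c2 * mom (S a) j).
  { apply is_RInt_unique. apply Hg. lra. }
  rewrite <- HI. apply (small_zero _ (c1 + c2 + 1)). lra.
  intros e He.
  assert (Hex : ex_RInt g 0 1). { eexists. apply Hg. lra. }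
  rewrite <- (RInt_Chasles g 0 e 1).
  2: { apply (ex_RInt_Chasles_1 (V := R_CompleteNormedModule) _ 0 e 1); auto; lra. }
  2: { apply (ex_RInt_Chasles_2 (V := R_CompleteNormedModule) _ 0 e 1); auto; lra. }
  assert (H1 : RInt g e 1 = 0 - e ^ S a * p e ^ S j).
  { apply is_RInt_unique.
    assert (E : 0 - e ^ S a * p e ^ S j = minus (1 ^ S a * p 1 ^ S j) (e ^ S a * p e ^ S j)).
    { unfold p. rewrite ln_1, Rmult_0_r, pow_i by lia. unfold minus, plus, opp. simpl. ring. }
    rewrite E. apply (is_RInt_derive (V := R_CompleteNormedModule) (fun y => y ^ S a * p y ^ S j) g).
    - intros x Hx. rewrite Rmin_left, Rmax_right in Hx by lra. unfold g, c1, c2, p. apply deriv_F. lra.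
    - intros x Hx. rewrite Rmin_left, Rmax_right in Hx by lra. refine (ex_derive_continuous g x _).
      unfold g, p. auto_derive. lra. }
  rewrite H1.
  assert (H2 : Rabs (RInt g 0 e) <= (e - 0) * (c1 + c2)).
  { apply abs_RInt_le_const. lra. apply (ex_RInt_Chasles_1 (V := R_CompleteNormedModule) _ 0 e 1); auto; lra.
    intros t Ht. apply Hgb. lra. }
  assert (H3 : Rabs (e ^ S a * p e ^ S j) <= e).
  { rewrite Rabs_mult, <- !RPow_abs. simpl. rewrite !Rabs_right by lra.
    assert (0 <= e ^ a <= 1). { split. apply pow_le; lra. apply pow_le1. lra. }
    assert (0 <= Rabs (p e) <= 1). { split. apply Rabs_pos. apply p_abs. lra. }
    assert (0 <= Rabs (p e) ^ j <= 1). { split. apply pow_le, Rabs_pos. apply pow_le1. lra. }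
    assert (0 <= e * e ^ a <= e) by nra.
    assert (0 <= Rabs (p e) * Rabs (p e) ^ j <= 1) by nra.
    nra. }
  unfold plus; simpl. eapply Rle_trans. apply Rabs_triang.
  rewrite Rminus_0_l, Rabs_Ropp. simpl in H3. nra.
Qed.

Lemma mom0 a : mom a 0 = / (INR a + 1).
Proof.
  unfold mom. apply is_RInt_unique.
  assert (E : / (INR a + 1) = minus (1 ^ S a / (INR a + 1)) (0 ^ S a / (INR a + 1))).
  { rewrite pow1, pow_i by lia. unfold minus, plus, opp; simpl. field. pose proof (pos_INR a). lra. }
  rewrite E. apply (is_RInt_derive (V := R_CompleteNormedModule) (fun y => y ^ S a / (INR a + 1))).
  - intros x Hx. auto_derive. pose proof (pos_INR a). lra.
    change (match a with 0%nat => 1 | S _ => INR a + 1 end) with (INR (S a)). rewrite S_INR. simpl. field. pose proof (pos_INR a). lra.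
  - intros x Hx. apply (cont_mom a 0). rewrite Rmin_left in Hx; lra.
Qed.

Lemma mom_formula j : forall a, mom a j = (-1) ^ j * INR (Factorial.fact j) / (INR a + INR j + 1) ^ (S j).
Proof.
  induction j as [|j IH]; intros a.
  - rewrite mom0. simpl. field. pose proof (pos_INR a). lra.
  - pose proof (mom_rec a j) as H. rewrite IH in H.
    assert (Hp : 0 < INR a + INR (S j) + 1). { pose proof (pos_INR a). pose proof (pos_INR (S j)). lra. }
    assert (E : INR (S a) + INR j + 1 = INR a + INR (S j) + 1) by (rewrite !S_INR; ring).
    rewrite E in H.
    assert (mom a (S j) = - INR (S j) * ((-1) ^ j * INR (Factorial.fact j) / (INR a + INR (S j) + 1) ^ S j) / (INR a + 1 + INR (S j))).
    { set (X := (-1) ^ j * INR (Factorial.fact j) / (INR a + INR (S j) + 1) ^ S j) in *.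
      apply (Rmult_eq_reg_l (INR a + 1 + INR (S j))). 2: lra.
      replace ((INR a + 1 + INR (S j)) * (- INR (S j) * X / (INR a + 1 + INR (S j)))) with (- INR (S j) * X) by (field; lra).
      lra. }
    rewrite H0, fact_simpl, mult_INR.
    replace (INR a + 1 + INR (S j)) with (INR a + INR (S j) + 1) by ring.
    set (d := INR a + INR (S j) + 1) in *.
    rewrite <- (tech_pow_Rmult d (S j)). rewrite <- (tech_pow_Rmult (-1) j).
    assert (d ^ S j <> 0) by (apply pow_nonzero; lra).
    field. split; lra.
Qed.

Definition ea (y : R) (k : nat) : R := y ^ k / INR (Factorial.fact k).

Lemma ea_series y : is_series (ea y) (exp y).
Proof.
  eapply is_series_ext. 2: apply (is_exp_Reals y).
  intros n. unfold ea. rewrite <- pow_n_pow. reflexivity.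
Qed.

Lemma fact_pos k : 0 < INR (Factorial.fact k).
Proof. apply lt_0_INR. apply Factorial.lt_O_fact. Qed.

Lemma ea_tail y N : is_series (fun k => ea y (S N + k)) (exp y - sum_n (ea y) N).
Proof.
  apply is_series_incr_n. lia. change (Init.Nat.pred (S N)) with N.
  match goal with |- is_series _ ?l => replace l with (exp y) end. apply ea_series.
  unfold plus; simpl. unfold Rminus. rewrite Rplus_assoc, Rplus_opp_l, Rplus_0_r. reflexivity.
Qed.

Lemma exp_rem y A N : Rabs y <= A -> Rabs (exp y - sum_n (ea y) N) <= exp A - sum_n (ea A) N.
Proof.
  intros HA.
  assert (Hb : forall k, Rabs (ea y k) <= ea A k).
  { intros k. unfold ea. rewrite Rabs_div. 2: apply Rgt_not_eq, fact_pos.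
    rewrite (Rabs_right (INR _)) by (left; apply fact_pos). rewrite <- RPow_abs.
    apply Rmult_le_compat_r. left; apply Rinv_0_lt_compat, fact_pos.
    apply pow_incr. split. apply Rabs_pos. exact HA. }
  rewrite <- (is_series_unique _ _ (ea_tail y N)).
  rewrite <- (is_series_unique _ _ (ea_tail A N)).
  assert (HexA : ex_series (fun k => ea A (S N + k))) by (eexists; apply ea_tail).
  assert (Hexa : ex_series (fun k => Rabs (ea y (S N + k)))).
  { apply (ex_series_le (V := R_CompleteNormedModule)) with (2 := HexA). intros n.
    change (norm (Rabs (ea y (S N + n)))) with (Rabs (Rabs (ea y (S N + n)))).
    rewrite Rabs_Rabsolu. apply Hb. }
  eapply Rle_trans. apply Series_Rabs. exact Hexa.
  apply Series_le. 2: exact HexA. intros n. split. apply Rabs_pos. apply Hb.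
Qed.

Lemma rem_lim A : is_lim_seq (fun N => exp A - sum_n (ea A) N) 0.
Proof.
  replace 0 with (exp A - exp A) by ring.
  apply (is_lim_seq_minus' (fun _ => exp A) (sum_n (ea A))). apply is_lim_seq_const.
  apply ea_series.
Qed.

Definition G (t : R) : R := RInt (fun x => exp (- t * p x)) 0 1.

Lemma cont_expp c x : 0 <= x -> continuous (fun y => exp (c * p y)) x.
Proof.
  intros H. apply (continuous_comp p (fun z => exp (c * z))). apply p_cont; auto.
  refine (ex_derive_continuous (fun z => exp (c * z)) _ _). auto_derive; auto.
Qed.

Lemma ex_RInt_expp c u v : 0 <= u <= v -> ex_RInt (fun y => exp (c * p y)) u v.
Proof.
  intros H. apply (ex_RInt_continuous (V := R_CompleteNormedModule)). intros z Hz. apply cont_expp.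
  rewrite Rmin_left in Hz by lra. lra.
Qed.

Definition cterm (t : R) (k : nat) : R := t ^ k / (INR k + 1) ^ (S k).

Lemma partial_RInt t N : is_RInt (fun x => sum_n (ea (- t * p x)) N) 0 1 (sum_n (cterm t) N).
Proof.
  assert (Hk : forall k, is_RInt (fun x => ea (- t * p x) k) 0 1 (cterm t k)).
  { intros k.
    assert (E : cterm t k = scal ((- t) ^ k / INR (Factorial.fact k)) (mom 0 k)).
    { rewrite mom_formula. unfold cterm. change (scal ?a ?b) with (a * b).
      replace (INR 0 + INR k + 1) with (INR k + 1) by (simpl; ring).
      pose proof (fact_pos k).
      assert (HD : (INR k + 1) ^ S k <> 0) by (apply pow_nonzero; pose proof (pos_INR k); lra).
      replace (- t) with ((-1) * t) by ring. rewrite Rpow_mult_distr.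
      assert (H1 : (-1) ^ k * (-1) ^ k = 1).
      { rewrite <- Rpow_mult_distr. replace (-1 * -1) with 1 by ring. apply pow1. }
      set (m := (-1) ^ k) in *. set (D := (INR k + 1) ^ S k) in *. set (f := INR (Factorial.fact k)) in *.
      replace (m * t ^ k / f * (m * f / D)) with ((m * m) * t ^ k / D) by (field; split; lra).
      rewrite H1. field. auto. }
    rewrite E. eapply is_RInt_ext. 2: apply (is_RInt_scal (V := R_NormedModule)); apply (RInt_correct (V := R_CompleteNormedModule)); apply (ex_RInt_mom 0 k); lra.
    intros x _. unfold ea, scal; simpl; unfold mult; simpl. rewrite Rpow_mult_distr. field. apply Rgt_not_eq, fact_pos. }
  induction N.
  - rewrite sum_O. eapply is_RInt_ext. 2: apply (Hk 0%nat). intros x _. rewrite sum_O. reflexivity.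
  - rewrite sum_Sn. eapply is_RInt_ext. 2: apply (is_RInt_plus (V := R_NormedModule)); [exact IHN | apply (Hk (S N))].
    intros x _. rewrite sum_Sn. reflexivity.
Qed.

Lemma G_series t : is_series (cterm t) (G t).
Proof.
  set (A := Rabs t).
  assert (H : is_lim_seq (fun N => G t - sum_n (cterm t) N) 0).
  { apply is_lim_seq_abs_0.
    apply (is_lim_seq_le_le (fun _ => 0) _ (fun N => exp A - sum_n (ea A) N)).
    2: apply is_lim_seq_const. 2: apply rem_lim.
    intros N. split. apply Rabs_pos.
    assert (E : G t - sum_n (cterm t) N = RInt (fun x => exp (- t * p x) - sum_n (ea (- t * p x)) N) 0 1).
    { symmetry. apply is_RInt_unique.
      apply (is_RInt_minus (V := R_NormedModule)). apply (RInt_correct (V := R_CompleteNormedModule)). apply ex_RInt_expp; lra.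
      apply partial_RInt. }
    rewrite E. replace (exp A - sum_n (ea A) N) with ((1 - 0) * (exp A - sum_n (ea A) N)) by ring.
    apply abs_RInt_le_const. lra.
    { eexists. apply (is_RInt_minus (V := R_NormedModule)). apply (RInt_correct (V := R_CompleteNormedModule)). apply ex_RInt_expp; lra.
      apply partial_RInt. }
    intros x Hx. apply exp_rem. rewrite Rabs_mult, Rabs_Ropp. unfold A.
    pose proof (p_abs x Hx). pose proof (Rabs_pos t). nra. }
  pose proof (is_lim_seq_minus' _ _ _ _ (is_lim_seq_const (G t)) H) as H2.
  rewrite Rminus_0_r in H2.
  change (is_lim_seq (sum_n (cterm t)) (G t)).
  eapply is_lim_seq_ext. 2: exact H2. intros n. unfold Rminus. rewrite Ropp_plus_distr, Ropp_involutive, <- Rplus_assoc, Rplus_opp_r, Rplus_0_l. reflexivity.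
Qed.

Lemma sophf_G t : sophf t = t * G t.
Proof.
  assert (E : forall n, t * cterm t n = t ^ S n / INR (S n) ^ S n).
  { intros n. unfold cterm. rewrite S_INR.
    assert ((INR n + 1) ^ S n <> 0) by (apply pow_nonzero; pose proof (pos_INR n); lra).
    rewrite <- (tech_pow_Rmult t n). field. auto. }
  apply is_series_unique.
  eapply is_series_ext. 2: apply (is_series_scal_l (V := R_NormedModule) t _ _ (G_series t)).
  intros n. apply E.
Qed.

Lemma exp_mono x y : x <= y -> exp x <= exp y.
Proof. intros H. destruct (Req_dec x y). subst; lra. apply Rlt_le, exp_increasing; lra. Qed.

Lemma is_RInt_expl c d u v : c <> 0 -> u <= v ->
  is_RInt (fun x => exp (c * x + d)) u v ((exp (c * v + d) - exp (c * u + d)) / c).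
Proof.
  intros Hc Huv.
  assert (E : (exp (c * v + d) - exp (c * u + d)) / c = minus (exp (c * v + d) / c) (exp (c * u + d) / c)).
  { unfold minus, plus, opp; simpl. field. auto. }
  rewrite E. apply (is_RInt_derive (V := R_CompleteNormedModule) (fun x => exp (c * x + d) / c)).
  - intros x _. auto_derive. auto. field. auto.
  - intros x _. refine (ex_derive_continuous (fun x => exp (c * x + d)) x _). auto_derive. auto.
Qed.

Lemma int_cmp s c d u v : 0 <= u <= v -> c <> 0 ->
  (forall x, u < x < v -> s * p x <= c * x + d) ->
  RInt (fun x => exp (s * p x)) u v <= (exp (c * v + d) - exp (c * u + d)) / c.
Proof.
  intros Huv Hc H.
  rewrite <- (is_RInt_unique _ _ _ _ (is_RInt_expl c d u v Hc ltac:(lra))).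
  apply RInt_le. lra. apply ex_RInt_expp; lra.
  eexists. apply is_RInt_expl; auto; lra.
  intros x Hx. apply exp_mono. apply H; auto.
Qed.

Lemma lower_K s : 0 < s -> 1 - exp (- s) <= s * RInt (fun x => exp (s * p x)) 0 1.
Proof.
  intros Hs.
  assert (H : (exp (s * 1 + - s) - exp (s * 0 + - s)) / s <= RInt (fun x => exp (s * p x)) 0 1).
  { rewrite <- (is_RInt_unique _ _ _ _ (is_RInt_expl s (- s) 0 1 ltac:(lra) ltac:(lra))).
    apply RInt_le. lra. eexists. apply is_RInt_expl; lra. apply ex_RInt_expp; lra.
    intros x Hx. apply exp_mono. pose proof (p_ge x ltac:(lra)). nra. }
  replace (s * 1 + - s) with 0 in H by ring. replace (s * 0 + - s) with (- s) in H by ring.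
  rewrite exp_0 in H.
  apply (Rmult_le_compat_l s) in H; [|lra].
  replace (s * ((1 - exp (- s)) / s)) with (1 - exp (- s)) in H by (field; lra).
  exact H.
Qed.

Lemma upper_K s eta a : 0 < s -> 0 < eta < a -> a < 1 ->
  s * RInt (fun x => exp (s * p x)) 0 1 <= 1 / (- ln eta) + 2 / (s * (eta * (1 - a)) ^ 2) + 1 / a.
Proof.
  intros Hs He Ha.
  set (f := fun x => exp (s * p x)).
  assert (HL : ln eta < 0). { rewrite <- ln_1. apply ln_increasing; lra. }
  set (L := - ln eta). assert (HL' : 0 < L) by (unfold L; lra).
  assert (Hex : forall u v, 0 <= u <= v -> ex_RInt f u v) by (intros; apply ex_RInt_expp; auto).
  assert (E1 : RInt f 0 1 = RInt f 0 eta + (RInt f eta a + RInt f a 1)).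
  { rewrite <- (RInt_Chasles f 0 eta 1) by (apply Hex; lra).
    rewrite <- (RInt_Chasles f eta a 1) by (apply Hex; lra). reflexivity. }
  assert (P1 : RInt f 0 eta <= (exp (- s * L * eta + 0) - exp (- s * L * 0 + 0)) / (- s * L)).
  { apply int_cmp. lra. nra. intros x Hx.
    pose proof (p_le_eta x eta ltac:(lra) ltac:(lra)). unfold L. nra. }
  replace (- s * L * 0 + 0) with 0 in P1 by ring. rewrite exp_0 in P1.
  assert (P1' : s * RInt f 0 eta <= 1 / L).
  { pose proof (exp_pos (- s * L * eta + 0)).
    apply (Rmult_le_compat_l s) in P1; [|lra].
    replace (s * ((exp (- s * L * eta + 0) - 1) / (- s * L))) with ((1 - exp (- s * L * eta + 0)) / L) in P1 by (field; lra).
    eapply Rle_trans. exact P1. unfold Rdiv. apply Rmult_le_compat_r. left; apply Rinv_0_lt_compat; lra. lra. }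
  assert (P3 : RInt f a 1 <= (exp (s * a * 1 + - (s * a)) - exp (s * a * a + - (s * a))) / (s * a)).
  { apply int_cmp. lra. nra. intros x Hx.
    pose proof (p_le_sq x ltac:(lra)).
    assert (x * (x - 1) <= a * (x - 1)) by nra.
    assert (p x <= a * (x - 1)) by lra.
    replace (s * a * x + - (s * a)) with (s * (a * (x - 1))) by ring.
    apply Rmult_le_compat_l; lra. }
  replace (s * a * 1 + - (s * a)) with 0 in P3 by ring. rewrite exp_0 in P3.
  assert (P3' : s * RInt f a 1 <= 1 / a).
  { pose proof (exp_pos (s * a * a + - (s * a))).
    apply (Rmult_le_compat_l s) in P3; [|lra].
    replace (s * ((1 - exp (s * a * a + - (s * a))) / (s * a))) with ((1 - exp (s * a * a + - (s * a))) / a) in P3 by (field; lra).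
    eapply Rle_trans. exact P3. unfold Rdiv. apply Rmult_le_compat_r. left; apply Rinv_0_lt_compat; lra. lra. }
  set (c := eta * (1 - a)). assert (Hc : 0 < c) by (unfold c; nra).
  assert (P2 : RInt f eta a <= (a - eta) * exp (- (s * c))).
  { eapply Rle_trans. apply Rle_abs. apply abs_RInt_le_const. lra. apply Hex; lra.
    intros x Hx. unfold f. rewrite Rabs_right by (left; apply exp_pos). apply exp_mono.
    pose proof (p_le_sq x ltac:(lra)). unfold c.
    assert (x * (x - 1) <= - (eta * (1 - a))) by nra. nra. }
  assert (P2' : s * RInt f eta a <= 2 / (s * c ^ 2)).
  { pose proof (exp_sq (s * c) ltac:(nra)). pose proof (exp_pos (s * c)).
    rewrite exp_Ropp in P2.
    assert (s * RInt f eta a <= s / exp (s * c)).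
    { apply (Rmult_le_compat_l s) in P2; [|lra]. eapply Rle_trans. exact P2.
      unfold Rdiv. assert (0 < / exp (s * c)) by (apply Rinv_0_lt_compat; lra).
      assert (0 <= s * / exp (s * c)) by nra.
      replace (s * ((a - eta) * / exp (s * c))) with ((a - eta) * (s * / exp (s * c))) by ring.
      assert (a - eta <= 1) by lra. nra. }
    eapply Rle_trans. exact H1.
    assert (0 < s * c ^ 2) by (apply Rmult_lt_0_compat; [lra | apply pow_lt; lra]).
    apply (Rmult_le_reg_r (exp (s * c) * (s * c ^ 2))). nra.
    replace (s / exp (s * c) * (exp (s * c) * (s * c ^ 2))) with (s * (s * c ^ 2)) by (field; lra).
    replace (2 / (s * c ^ 2) * (exp (s * c) * (s * c ^ 2))) with (2 * exp (s * c)) by (field; lra).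
    replace ((s * c) ^ 2) with (s * (s * c ^ 2)) in H by ring. lra. }
  rewrite E1. fold c. nra.
Qed.

Theorem mainTheorem8 : is_lim sophf m_infty (-1).
Proof.
  apply is_lim_spec. intros eps. simpl.
  pose proof (cond_pos eps) as Heps.
  set (e := Rmin eps 1).
  assert (He : 0 < e) by (apply Rmin_pos; lra).
  assert (He1 : e <= 1) by apply Rmin_r.
  assert (He2 : e <= eps) by apply Rmin_l.
  set (a := / (1 + e / 4)).
  assert (Ha1 : 1 / a = 1 + e / 4) by (unfold a; field; lra).
  assert (Ha : 4 / 5 <= a < 1).
  { unfold a. split.
    - apply (Rmult_le_reg_r (1 + e / 4)). lra. rewrite Rinv_l by lra. lra.
    - apply (Rmult_lt_reg_r (1 + e / 4)). lra. rewrite Rinv_l by lra. lra. }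
  set (eta := exp (- (4 / e))).
  assert (Hle : - ln eta = 4 / e) by (unfold eta; rewrite ln_exp; ring).
  assert (He4 : 0 < 4 / e) by (apply Rdiv_lt_0_compat; lra).
  assert (Heta : 0 < eta < 1 / 5).
  { split. apply exp_pos. unfold eta. rewrite exp_Ropp.
    pose proof (exp_ineq1 (4 / e) ltac:(lra)).
    assert (4 / e >= 4) by (apply Rle_ge; apply (Rmult_le_reg_r e); [lra|]; field_simplify; nra).
    apply (Rmult_lt_reg_r (exp (4 / e))). apply exp_pos. rewrite Rinv_l by (apply Rgt_not_eq, exp_pos). lra. }
  set (c := eta * (1 - a)).
  assert (Hc : 0 < c) by (unfold c; nra).
  set (S := Rmax (8 / (e * c ^ 2)) (1 / e) + 1).
  exists (- S). intros t Ht.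
  set (s := - t).
  assert (HS1 : 8 / (e * c ^ 2) < s) by (pose proof (Rmax_l (8 / (e * c ^ 2)) (1 / e)); unfold s, S in *; lra).
  assert (HS2 : 1 / e < s) by (pose proof (Rmax_r (8 / (e * c ^ 2)) (1 / e)); unfold s, S in *; lra).
  assert (Hs : 0 < s). { assert (0 < 1 / e) by (apply Rdiv_lt_0_compat; lra). lra. }
  rewrite sophf_G. unfold G.
  replace (- t) with s by reflexivity.
  replace t with (- s) by (unfold s; ring).
  set (I := RInt (fun x => exp (s * p x)) 0 1).
  pose proof (lower_K s Hs) as HL. fold I in HL.
  pose proof (upper_K s eta a Hs ltac:(lra) ltac:(lra)) as HU. fold I in HU. fold c in HU.
  rewrite Hle, Ha1 in HU.
  replace (1 / (4 / e)) with (e / 4) in HU by (field; lra).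
  assert (Hc2 : 0 < c ^ 2) by (apply pow_lt; lra).
  assert (Hq : 2 / (s * c ^ 2) < e / 4).
  { apply (Rmult_lt_reg_r (s * c ^ 2)). nra.
    replace (2 / (s * c ^ 2) * (s * c ^ 2)) with 2 by (field; nra).
    apply (Rmult_lt_compat_r (e * c ^ 2)) in HS1; [|nra].
    replace (8 / (e * c ^ 2) * (e * c ^ 2)) with 8 in HS1 by (field; nra). nra. }
  assert (Hx : exp (- s) < e).
  { rewrite exp_Ropp. pose proof (exp_ineq1_le s). pose proof (exp_pos s).
    apply (Rmult_lt_reg_r (exp s)). lra. rewrite Rinv_l by lra.
    apply (Rmult_lt_compat_r e) in HS2; [|lra]. replace (1 / e * e) with 1 in HS2 by (field; lra). nra. }
  apply Rabs_def1; lra.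
Qed.
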